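(* Let $\mathbb{K}$ be a field, $n>1$, $a=\sum_{j=0}^d c_j s^j\in\mathbb{K}[s]^n$ a non-zero row vector of degree $d$, and $A\in\mathbb{K}^{(2d+1)\times n(d+1)}$ the matrix whose $(i,\,kn+r)$ entry ($1\le i\le 2d+1$, $0\le k\le d$, $1\le r\le n$) is the $r$-th entry of $c_{i-1-k}$ (zero if $i-1-k\notin\{0,\dots,d\}$). With $\tilde q$ and $b_r$ as in the context, the leading vectors $LV(b_r^\flat)$, $r\in\tilde q$, are linearly independent over $\mathbb{K}$.
   Context: A column of a matrix is pivotal if it is either the first column and non-zero, or linearly independent of all previous columns; otherwise non-pivotal. $p$ is the set of pivotal indices of $A$, $q$ the set of non-pivotal indices, and $\tilde q=\{\min\varrho\mid\varrho\in q/(n)\}$ the basic non-pivotal indices. For $i\in q$ write uniquely $A_{*i}=\sum_{\{j\in p\mid j<i\}}\alpha^{(i)}_jA_{*j}$ and set $b_i=e_i-\sum_{\{j\in p\mid j<i\}}\alpha^{(i)}_je_j$. For $v=[w_0;\dots;w_d]\in\mathbb{K}^{n(d+1)}$ ($w_i\in\mathbb{K}^n$), $v^\flat=\sum_i s^iw_i$. For non-zero $h\in\mathbb{K}[s]^n$ with $t=\deg(h)=\max_i\deg(h_i)$, $LV(h)\in\mathbb{K}^n$ is the vector of coefficients of $s^t$ in $h_1,\dots,h_n$. *)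

(* Defs.v *)
From HB Require Import structures.
From mathcomp Require Import all_boot all_order all_algebra.
Set Implicit Arguments. Unset Strict Implicit. Unset Printing Implicit Defensive.
Import Order.TTheory GRing.Theory Num.Theory.
Local Open Scope ring_scope.

(* All indices are 0-based: the paper's row i (1..2d+1) is our i-1, the
   paper's column k*n + r (r in 1..n) is our k*n + (r-1). *)

Section Defs.
Variable K : fieldType.

(* The matrix A of the statement built from a = sum_j c_j s^j, where
   (c_j)_r = (a_r)`_j. Entry (i, k*n+r) = (c_{i-k})_r, zero if i-k not in 0..d. *)
Definition sylA (n d : nat) (a : 'rV[{poly K}]_n) : 'M[K]_(2 * d + 1, n * d.+1) :=
  \matrix_(i < 2 * d + 1, j < n * d.+1)
    let k := (j %/ n)%N in
    let r := (j %% n)%N in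
    if (k <= i)%N && (i - k <= d)%N then
      (if insub r is Some r' then (a ord0 r')`_(i - k) else 0)
    else 0.

Definition pivotal (m N : nat) (A : 'M[K]_(m, N)) (j : 'I_N) : bool :=
  ~~ (row j A^T <= \sum_(j' < N | (j' < j)%N) <<row j' A^T>>)%MS.

(* basic non-pivotal indices: minima of the classes of q modulo n *)
Definition basic_nonpivotal (n m N : nat) (A : 'M[K]_(m, N)) (r : 'I_N) : bool :=
  ~~ pivotal A r &&
  [forall r' : 'I_N, ((r' < r)%N && (r' == r %[mod n])) ==> pivotal A r'].

Definition bvec (m N : nat) (A : 'M[K]_(m, N)) (alpha : 'I_N -> 'I_N -> K)
    (i : 'I_N) : 'cV[K]_N :=
  delta_mx i 0 - \sum_(j < N | pivotal A j && (j < i)%N) alpha i j *: delta_mx j 0.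

(* entry m of a vector of length N (0 if out of range) *)
Definition vget (N : nat) (v : 'cV[K]_N) (m : nat) : K :=
  if insub m is Some j then v j 0 else 0.

Definition flat (n d : nat) (v : 'cV[K]_(n * d.+1)) : 'rV[{poly K}]_n :=
  \row_(r < n) \poly_(k < d.+1) vget v (k * n + r).

Definition pdeg (n : nat) (h : 'rV[{poly K}]_n) : nat :=
  \max_(i < n) (size (h ord0 i)).-1.

Definition LV (n : nat) (h : 'rV[{poly K}]_n) : 'rV[K]_n :=
  \row_(i < n) (h ord0 i)`_(pdeg h).

End Defs.

Arguments sylA {K n} d a.
Arguments pivotal {K m N} A j.
Arguments basic_nonpivotal {K} n {m N} A r.
Arguments bvec {K m N} A alpha i.
Arguments flat {K n d} v.
Arguments pdeg {K n} h.
Arguments LV {K n} h.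

(* Main.v *)
Require Import Defs.
From HB Require Import structures.
From mathcomp Require Import all_boot all_order all_algebra zify.
Import Order.TTheory GRing.Theory Num.Theory.
Local Open Scope ring_scope.


Lemma tri_free (K : fieldType) n (I : eqType) (x0 : I) (e : seq I)
   (f : I -> 'rV[K]_n) (rho : I -> 'I_n) :
 uniq e -> {in e &, injective rho} ->
 (forall x, x \in e -> f x 0 (rho x) = 1) ->
 (forall x (c : 'I_n), x \in e -> (rho x < c)%N -> f x 0 c = 0) ->
 free (map f e).
Proof.
move=> Hu Hinj H1 H0.
apply/(@freeP _ _ _ (in_tuple (map f e))) => k Hk.
set m := size (map f e) in k Hk *.
have sz : m = size e by rewrite /m size_map.
have nthE (t : 'I_m) : (map f e)`_t = f (nth x0 e t).
  by rewrite (nth_map x0) // -sz.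
have inE (t : 'I_m) : nth x0 e t \in e by rewrite mem_nth // -sz.
case: (pickP (fun t => k t != 0)) => [t0 Ht0 | H]; last first.
  by move=> t; apply/eqP; have := H t => /= /negbFE.
pose R (t : 'I_m) : nat := rho (nth x0 e t).
case: (@arg_maxnP _ t0 (fun t => k t != 0) R Ht0) => tm Htm Hmax.
have := congr1 (fun v : 'rV_n => v 0 (rho (nth x0 e tm))) Hk.
rewrite /= summxE (bigD1 tm) //= big1 ?addr0.
  by rewrite !mxE nthE H1 // mulr1 => /eqP; rewrite (negbTE Htm).
move=> j Hj; rewrite !mxE nthE.
case: (eqVneq (k j) 0) => [->|kj]; first by rewrite mul0r.
rewrite H0 ?mulr0 //.
have := Hmax j kj; rewrite /= /R leq_eqVlt; case/orP => [/eqP E|//].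
have := Hinj _ _ (inE j) (inE tm) (val_inj E).
move/eqP; rewrite nth_uniq ?(ltn_ord, Hu) -?sz //.
by move/eqP/val_inj => E'; rewrite E' eqxx in Hj.
Qed.


Section B.
Variables (K : fieldType) (n d m : nat) (A : 'M[K]_(m, n * d.+1))
  (alpha : 'I_(n * d.+1) -> 'I_(n * d.+1) -> K).
Hypothesis n_gt0 : (0 < n)%N.

Lemma ordF1 {N} {x y : 'I_N} : (x < y)%N -> (y == x) = false.
Proof. by move=> h; rewrite -val_eqE /= gtn_eqF. Qed.
Lemma ordF2 {N} {x y : 'I_N} : (x < y)%N -> (x == y) = false.
Proof. by move=> h; rewrite -val_eqE /= ltn_eqF. Qed.

Lemma bvec_gt (i j : 'I_(n * d.+1)) : (i < j)%N -> bvec A alpha i j 0 = 0.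
Proof.
move=> lt; rewrite /bvec !mxE summxE big1 ?subr0.
  by rewrite (ordF1 lt).
move=> k /andP[_ lk]; rewrite !mxE.
by rewrite (ordF1 (ltn_trans lk lt)) mulr0.
Qed.

Lemma bvec_eq (i : 'I_(n * d.+1)) : bvec A alpha i i 0 = 1.
Proof.
rewrite /bvec !mxE summxE big1 ?subr0 ?eqxx //.
move=> k /andP[_ lk]; rewrite !mxE.
by rewrite (ordF1 lk) mulr0.
Qed.

Lemma vget_gt (i : 'I_(n * d.+1)) (j : nat) : (i < j)%N -> vget (bvec A alpha i) j = 0.
Proof.
rewrite /vget; case: insubP => // j' _ <- lt; exact: bvec_gt.
Qed.

Lemma vget_eq (i : 'I_(n * d.+1)) : vget (bvec A alpha i) i = 1.
Proof.
rewrite /vget insubT //= => H; rewrite -(bvec_eq i); congr (bvec _ _ _ _ _); exact: val_inj.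
Qed.

Lemma divn_lt (i : 'I_(n * d.+1)) : (i %/ n < d.+1)%N.
Proof. by rewrite ltn_divLR // [(_ * n)%N]mulnC. Qed.

Lemma pdeg_b (i : 'I_(n * d.+1)) : pdeg (flat (bvec A alpha i)) = (i %/ n)%N.
Proof.
apply/eqP; rewrite eqn_leq; apply/andP; split.
  apply/bigmax_leqP => c _; rewrite mxE -ltnS.
  case: (posnP (size (\poly_(k < d.+1) vget (bvec A alpha i) (k * n + c)))) => [->//|sp].
  rewrite prednK //; apply/leq_sizeP => j lj; rewrite coef_poly.
  case: ifP => // _; apply: vget_gt.
  have h1 := divn_eq i n; have h2 := ltn_pmod i n_gt0.
  have h3 : ((i %/ n).+1 * n <= j * n)%N by rewrite leq_mul2r lj orbT.
  lia.
rewrite /pdeg; apply: leq_trans (leq_bigmax (Ordinal (ltn_pmod i n_gt0))).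
rewrite mxE -ltnS; set P := \poly_(_ < _) _.
have: (i %/ n < size P)%N.
  rewrite ltnNge; apply/negP=> /leq_sizeP/(_ _ (leqnn _)).
  by rewrite coef_poly divn_lt /= -divn_eq vget_eq => /eqP; rewrite oner_eq0.
by case: (size P).
Qed.

Lemma LV_b (i : 'I_(n * d.+1)) (c : 'I_n) :
  LV (flat (bvec A alpha i)) 0 c = vget (bvec A alpha i) (i %/ n * n + c).
Proof. by rewrite !mxE pdeg_b coef_poly divn_lt. Qed.

End B.

Theorem lemma10 (K : fieldType) (n d : nat) (a : 'rV[{poly K}]_n)
    (alpha : 'I_(n * d.+1) -> 'I_(n * d.+1) -> K) :
  (1 < n)%N ->
  a != 0 ->
  pdeg a = d ->
  (forall i : 'I_(n * d.+1), ~~ pivotal (sylA d a) i ->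
     col i (sylA d a) =
     \sum_(j < n * d.+1 | pivotal (sylA d a) j && (j < i)%N) alpha i j *: col j (sylA d a)) ->
  free [seq LV (flat (bvec (sylA d a) alpha r))
       | r <- enum (basic_nonpivotal n (sylA d a))].
Proof.
move=> n1 _ _ _.
have n_gt0 : (0 < n)%N by apply: ltn_trans n1.
have N_gt0 : (0 < n * d.+1)%N by rewrite muln_gt0 n_gt0.
apply: (@tri_free K n _ (Ordinal N_gt0) _ _ (fun i => Ordinal (ltn_pmod i n_gt0))).
- exact: enum_uniq.
- move=> i j; rewrite !mem_enum => Hi Hj /(congr1 val) /= E.
  have key : forall x y : 'I_(n * d.+1), basic_nonpivotal n (sylA d a) x ->
      basic_nonpivotal n (sylA d a) y -> (x %% n = y %% n)%N -> (x < y)%N -> False.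
    move=> x y /andP[nx _] /andP[_ /forallP /(_ x)] + exy lxy.
    by rewrite lxy exy eqxx /= (negbTE nx).
  case: (ltngtP i j) => [l|l|l]; first by case: (key _ _ Hi Hj E l).
    by case: (key _ _ Hj Hi (esym E) l).
  exact: val_inj.
- move=> i _ /=; rewrite LV_b //= -divn_eq; exact: vget_eq.
- move=> i c _ /= lc; rewrite LV_b //; apply: vget_gt.
  have h1 := divn_eq i n. lia.
Qed.
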